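(* Let $N:\mathbb R_+\to\mathbb R_+$ be measurable and let $\mathbf P\subset\mathbb P_{[0,1]}$ be a finite convex collection of bitiles with $\operatorname{mass}(\mathbf P)>0$. Then $\mathbf P=\mathbf P_{hi}\cup\mathbf P_{lo}$ (disjoint union) where (i) $\mathbf P_{hi}$ and $\mathbf P_{lo}$ are both convex; (ii) $\operatorname{mass}(\mathbf P_{lo})\le\frac12\operatorname{mass}(\mathbf P)$; (iii) $\mathbf P_{hi}$ is a convex forest whose trees $T\in\mathcal F$ satisfy $\sum_{T\in\mathcal F}|I_T|\lesssim\operatorname{mass}(\mathbf P)^{-1}$, with an absolute implicit constant.
   Context: Notation. $\mathbb R_+=[0,\infty)$. $\mathcal D_+$ denotes the set of dyadic intervals $[2^jm,2^j(m+1))$ with $j\in\mathbb Z$, $m\in\mathbb Z_{\ge 0}$. A bitile is $P=I_P\times\omega_P$ with $I_P,\omega_P\in\mathcal D_+$ and $|I_P||\omega_P|=2$. $\mathbb P_{all}$ is the set of all bitiles, and $\mathbb P_{[0,1]}=\{P\in\mathbb P_{all}:I_P\subset[0,1]\}$. For bitiles, $P\le P'$ means $I_P\subset I_{P'}$ and $\omega_{P'}\subset\omega_P$. A collection $\mathbf P$ of bitiles is convex if $P,P''\in\mathbf P$, $P'\in\mathbb P_{all}$ and $P\le P'\le P''$ imply $P'\in\mathbf P$. A tree $T$ with top data $(I_T,\xi_T)$, where $I_T\in\mathcal D_+$ and $\xi_T\in\mathbb R_+$ is not a dyadic rational, is a collection of bitiles with $I_P\subset I_T$ and $\xi_T\in\omega_P$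 for all $P\in T$. A forest is a finite collection of bitiles which is a disjoint union of convex trees $T\in\mathcal F$ (the trees together with their top data are part of the data of the forest); it is a convex forest if moreover the whole collection is convex. Mass (relative to the fixed choice function $N$): $E(P)=I_P\cap N^{-1}(\omega_P)$ and $\operatorname{mass}(\mathbf P)=\sup_{P\in\mathbf P}|E(P)|/|I_P|$. *)

(* Defs.v *)
From Stdlib Require Import Reals List ClassicalEpsilon.
Open Scope R_scope.

Definition cover_length (A : R -> Prop) (s : R) : Prop :=
  exists a b : nat -> R,
    (forall n, a n <= b n) /\
    (forall x, A x -> exists n, a n <= x < b n) /\
    infinite_sum (fun n => b n - a n) s.

Definition is_glb (S : R -> Prop) (r : R) : Prop :=
  (forall s, S s -> r <= s) /\ (forall r', (forall s, S s -> r' <= s) -> r' <= r).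

(* Lebesgue outer measure |A| (meaningful when A is bounded, which is the only
   case in which it is used below). *)
Definition leb_outer (A : R -> Prop) : R :=
  epsilon (inhabits 0) (fun r => is_glb (cover_length A) r).

Definition bounded_set (E : R -> Prop) : Prop :=
  exists M, forall x, E x -> Rabs x <= M.

(* Caratheodory criterion (test sets restricted to bounded sets). *)
Definition leb_measurable (A : R -> Prop) : Prop :=
  forall E, bounded_set E ->
    leb_outer E = leb_outer (fun x => E x /\ A x) + leb_outer (fun x => E x /\ ~ A x).

(* N : R_+ -> R_+ measurable, modelled as a function R -> R. *)
Definition nonneg_fun (N : R -> R) : Prop := forall x, 0 <= x -> 0 <= N x.
Definition measurable_fun (N : R -> R) : Prop :=
  forall a, leb_measurable (fun x => 0 <= x /\ N x < a).

(* dyad j m  represents  [2^j m, 2^j (m+1)) *)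
Record dyad := Dyad { dj : Z; dm : nat }.

Definition in_dyad (I : dyad) (x : R) : Prop :=
  powerRZ 2 (dj I) * INR (dm I) <= x < powerRZ 2 (dj I) * (INR (dm I) + 1).

Definition dlen (I : dyad) : R := powerRZ 2 (dj I).

Definition dsub (I J : dyad) : Prop := forall x, in_dyad I x -> in_dyad J x.

(* A bitile I x w with |I||w| = 2: I = [2^j m, 2^j(m+1)), w = [2^(1-j) k, 2^(1-j)(k+1)). *)
Record bitile := Bitile { tj : Z; tmI : nat; tmW : nat }.

Definition I_of (P : bitile) : dyad := Dyad (tj P) (tmI P).
Definition w_of (P : bitile) : dyad := Dyad (1 - tj P) (tmW P).

Definition in_P01 (P : bitile) : Prop :=
  forall x, in_dyad (I_of P) x -> 0 <= x <= 1.

Definition tile_le (P P' : bitile) : Prop :=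
  dsub (I_of P) (I_of P') /\ dsub (w_of P') (w_of P).

Definition convex (Ps : list bitile) : Prop :=
  forall P P' P'', In P Ps -> In P'' Ps -> tile_le P P' -> tile_le P' P'' -> In P' Ps.

Definition E_set (N : R -> R) (P : bitile) : R -> Prop :=
  fun x => in_dyad (I_of P) x /\ in_dyad (w_of P) (N x).

Definition tile_density (N : R -> R) (P : bitile) : R :=
  leb_outer (E_set N P) / dlen (I_of P).

(* sup over a finite collection (0 for the empty collection) *)
Definition mass (N : R -> R) (Ps : list bitile) : R :=
  fold_right (fun P acc => Rmax (tile_density N P) acc) 0 Ps.

Definition dyadic_rational (x : R) : Prop :=
  exists (n k : Z), x = IZR n * powerRZ 2 k.

Definition is_tree (T : list bitile) (IT : dyad) (xi : R) : Prop :=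
  0 <= xi /\ ~ dyadic_rational xi /\
  forall P, In P T -> dsub (I_of P) IT /\ in_dyad (w_of P) xi.

Definition tree_data := (list bitile * (dyad * R))%type.

Definition is_forest (Ps : list bitile) (F : list tree_data) : Prop :=
  (forall T, In T F -> is_tree (fst T) (fst (snd T)) (snd (snd T)) /\ convex (fst T)) /\
  (forall P, In P Ps <-> exists T, In T F /\ In P (fst T)) /\
  (forall i j d P, (i < length F)%nat -> (j < length F)%nat -> i <> j ->
      In P (fst (nth i F d)) -> ~ In P (fst (nth j F d))).

Definition is_convex_forest (Ps : list bitile) (F : list tree_data) : Prop :=
  is_forest Ps F /\ convex Ps.

Definition sum_top_lengths (F : list tree_data) : R :=
  fold_right (fun T acc => dlen (fst (snd T)) + acc) 0 F.

(* Main.v *)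
Require Import Defs.
From Stdlib Require Import Reals List ClassicalEpsilon ZArith Znumtheory Lia Lra.
Open Scope R_scope.

Lemma psum_mono (f : nat -> R) : (forall n, 0 <= f n) ->
  forall m n, (m <= n)%nat -> sum_f_R0 f m <= sum_f_R0 f n.
Proof.
  intros Hf m n H. induction H. lra. simpl. specialize (Hf (S m0)). lra.
Qed.

Lemma psum_growing (f : nat -> R) : (forall n, 0 <= f n) -> Un_growing (sum_f_R0 f).
Proof. intros Hf n. simpl. specialize (Hf (S n)). lra. Qed.

Lemma isum_nonneg (f : nat -> R) l : (forall n, 0 <= f n) -> infinite_sum f l -> 0 <= l.
Proof.
  intros Hf Hs. assert (H := growing_ineq _ _ (psum_growing f Hf) Hs 0%nat).
  simpl in H. specialize (Hf 0%nat). lra.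
Qed.

Lemma cover_nonneg A s : cover_length A s -> 0 <= s.
Proof.
  intros (a & b & Hab & _ & Hs). eapply isum_nonneg; [|exact Hs].
  intro n. specialize (Hab n). lra.
Qed.

Definition one_a (l : R) (n : nat) : R := match n with O => l | _ => 0 end.
Definition one_b (r : R) (n : nat) : R := match n with O => r | _ => 0 end.

Lemma one_cover A l r : l <= r -> (forall x, A x -> l <= x < r) -> cover_length A (r - l).
Proof.
  intros Hlr HA. exists (one_a l), (one_b r). split; [|split].
  - intros [|n]; simpl; lra.
  - intros x Hx. exists 0%nat. simpl. auto.
  - intros eps He. exists 0%nat. intros n _.
    replace (sum_f_R0 (fun n => one_b r n - one_a l n) n) with (r - l).
    unfold Rdist. rewrite Rminus_diag, Rabs_R0. lra.
    induction n. reflexivity. simpl. rewrite <- IHn. lra.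
Qed.

Lemma bounded_cover A : bounded_set A -> exists s, cover_length A s.
Proof.
  intros [M HM]. exists ((Rabs M + 1) - (- (Rabs M + 1))). apply one_cover.
  pose proof (Rabs_pos M). lra.
  intros x Hx. specialize (HM x Hx). pose proof (Rle_abs M).
  pose proof (Rle_abs x). pose proof (Rle_abs (-x)). rewrite Rabs_Ropp in *. split; lra.
Qed.

Lemma outer_glb A : bounded_set A -> is_glb (cover_length A) (leb_outer A).
Proof.
  intros HA. unfold leb_outer. apply epsilon_spec.
  destruct (bounded_cover A HA) as [s0 Hs0].
  destruct (completeness (fun y => cover_length A (- y))) as [m [Hub Hlub]].
  - exists 0. intros y Hy. apply cover_nonneg in Hy. lra.
  - exists (- s0). rewrite Ropp_involutive. exact Hs0.
  - exists (- m). split.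
    + intros s Hs. assert (- s <= m). apply Hub. rewrite Ropp_involutive; auto. lra.
    + intros r' Hr'. assert (m <= - r'). apply Hlub. intros y Hy. specialize (Hr' _ Hy). lra. lra.
Qed.

Lemma outer_le_cover A s : bounded_set A -> cover_length A s -> leb_outer A <= s.
Proof. intros HA Hs. apply (proj1 (outer_glb A HA)). auto. Qed.

Lemma outer_ge A r : bounded_set A -> (forall s, cover_length A s -> r <= s) -> r <= leb_outer A.
Proof. intros HA Hs. apply (proj2 (outer_glb A HA)). auto. Qed.

Lemma outer_nonneg A : bounded_set A -> 0 <= leb_outer A.
Proof. intros HA. apply outer_ge; auto. apply cover_nonneg. Qed.

Lemma bounded_sub A B : bounded_set B -> (forall x, A x -> B x) -> bounded_set A.
Proof. intros [M HM] H. exists M. auto. Qed.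

Lemma outer_mono A B : bounded_set B -> (forall x, A x -> B x) -> leb_outer A <= leb_outer B.
Proof.
  intros HB H. apply outer_ge. eapply bounded_sub; eauto.
  intros s (a & b & Hab & Hc & Hs). apply outer_le_cover. eapply bounded_sub; eauto.
  exists a, b. repeat split; auto.
Qed.

Lemma outer_ext A B : bounded_set B -> (forall x, A x <-> B x) -> leb_outer A = leb_outer B.
Proof.
  intros HB H. assert (HA : bounded_set A) by (eapply bounded_sub; eauto; firstorder).
  apply Rle_antisym; apply outer_mono; firstorder.
Qed.

Lemma ev2 k : Nat.even (2 * k) = true.
Proof. induction k. reflexivity. replace (2 * S k)%nat with (S (S (2 * k))) by lia. simpl. auto. Qed.
Lemma ev2s k : Nat.even (S (2 * k)) = false.
Proof. induction k. reflexivity. replace (S (2 * S k))%nat with (S (S (S (2 * k)))) by lia. simpl. auto. Qed.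

Definition inter (f g : nat -> R) (n : nat) : R :=
  if Nat.even n then f (Nat.div2 n) else g (Nat.div2 n).

Lemma inter_sum f g k :
  sum_f_R0 (inter f g) (S (2 * k)) = sum_f_R0 f k + sum_f_R0 g k.
Proof.
  induction k.
  - simpl. unfold inter. simpl. lra.
  - replace (S (2 * S k)) with (S (S (S (2 * k)))) by lia.
    rewrite tech5, tech5, IHk. rewrite (tech5 f), (tech5 g).
    unfold inter.
    replace (S (S (2 * k))) with (2 * S k)%nat by lia. rewrite ev2, Nat.div2_double.
    rewrite ev2s, Nat.div2_succ_double. lra.
Qed.

Lemma odd_cv (u : nat -> R) L : (forall m n, (m <= n)%nat -> u m <= u n) ->
  Un_cv (fun k => u (S (2 * k))) L -> Un_cv u L.
Proof.
  intros Hm Hc.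
  assert (Hle : forall k, u (S (2 * k)) <= L).
  { apply growing_ineq; auto. intro n. apply Hm. lia. }
  intros eps He. destruct (Hc eps He) as [K HK]. exists (S (2 * K)). intros n Hn.
  assert (A1 : u (S (2 * K)) <= u n) by (apply Hm; lia).
  assert (A2 : u n <= u (S (2 * n))) by (apply Hm; lia).
  specialize (Hle n). specialize (HK K (le_n _)).
  unfold Rdist in *. apply Rabs_def2 in HK. destruct HK.
  apply Rabs_def1; lra.
Qed.

Lemma inter_isum f g s1 s2 : (forall n, 0 <= f n) -> (forall n, 0 <= g n) ->
  infinite_sum f s1 -> infinite_sum g s2 -> infinite_sum (inter f g) (s1 + s2).
Proof.
  intros Hf Hg H1 H2. change (Un_cv (sum_f_R0 (inter f g)) (s1 + s2)).
  apply odd_cv.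
  - apply psum_mono. intro n. unfold inter. destruct (Nat.even n); auto.
  - eapply (Un_cv_ext (fun k => sum_f_R0 f k + sum_f_R0 g k)).
    intro k. simpl. symmetry. apply inter_sum.
    apply CV_plus; auto.
Qed.

Lemma cover_union A B C sB sC : (forall x, A x -> B x \/ C x) ->
  cover_length B sB -> cover_length C sC -> cover_length A (sB + sC).
Proof.
  intros H (a & b & Hab & Hc & Hs) (a' & b' & Hab' & Hc' & Hs').
  exists (inter a a'), (inter b b'). split; [|split].
  - intro n. unfold inter. destruct (Nat.even n); auto.
  - intros x Hx. destruct (H x Hx) as [Hb|Hb].
    + destruct (Hc x Hb) as [n Hn]. exists (2 * n)%nat. unfold inter.
      rewrite ev2, Nat.div2_double. auto.
    + destruct (Hc' x Hb) as [n Hn]. exists (S (2 * n)). unfold inter.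
      rewrite ev2s, Nat.div2_succ_double. auto.
  - eapply (Un_cv_ext (sum_f_R0 (inter (fun n => b n - a n) (fun n => b' n - a' n)))).
    + intro n. apply sum_eq. intros i _. unfold inter. destruct (Nat.even i); auto.
    + apply inter_isum; auto; intro n; [specialize (Hab n)|specialize (Hab' n)]; lra.
Qed.

Lemma outer_subadd A B C : bounded_set B -> bounded_set C ->
  (forall x, A x -> B x \/ C x) -> leb_outer A <= leb_outer B + leb_outer C.
Proof.
  intros HB HC H.
  assert (HA : bounded_set A).
  { destruct HB as [M1 H1], HC as [M2 H2]. exists (Rmax M1 M2). intros x Hx.
    destruct (H x Hx). eapply Rle_trans. apply H1; auto. apply Rmax_l.
    eapply Rle_trans. apply H2; auto. apply Rmax_r. }
  cut (leb_outer A - leb_outer B <= leb_outer C). lra.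
  apply outer_ge; auto. intros sC HsC.
  cut (leb_outer A - sC <= leb_outer B). lra.
  apply outer_ge; auto. intros sB HsB.
  cut (leb_outer A <= sB + sC). lra.
  apply outer_le_cover; auto. eapply cover_union; eauto.
Qed.

Lemma meas_compl A : leb_measurable A -> leb_measurable (fun x => ~ A x).
Proof.
  intros HA E HE. rewrite (HA E HE).
  rewrite (outer_ext (fun x => E x /\ ~ ~ A x) (fun x => E x /\ A x)).
  lra. apply (bounded_sub _ E HE). tauto.
  intro x. split; [intros [? ?]; split; auto; apply NNPP; auto | tauto].
Qed.

Lemma meas_inter A B : leb_measurable A -> leb_measurable B ->
  leb_measurable (fun x => A x /\ B x).
Proof.
  intros HA HB E HE.
  assert (bs : forall P : R -> Prop, bounded_set (fun x => E x /\ P x))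
    by (intro P; eapply bounded_sub; eauto; tauto).
  apply Rle_antisym.
  - apply outer_subadd; auto. intros x Hx; destruct (classic (A x /\ B x)); tauto.
  - rewrite (HA E HE). rewrite (HB _ (bs A)).
    rewrite (outer_ext (fun x => E x /\ A x /\ B x) (fun x => (E x /\ A x) /\ B x)); [|auto|tauto].
    assert (leb_outer (fun x => E x /\ ~ (A x /\ B x)) <=
       leb_outer (fun x => (E x /\ A x) /\ ~ B x) + leb_outer (fun x => E x /\ ~ A x)).
    { apply outer_subadd. eapply bounded_sub; [apply (bs A)|tauto]. auto.
      intros x [Hx Hn]. destruct (classic (A x)); tauto. }
    lra. apply (bounded_sub _ E HE). tauto.
Qed.

Lemma minmax_facts a b c : a <= b ->
  0 <= Rmin b c - Rmin a c <= b - a /\ 0 <= Rmax b c - Rmax a c <= b - a /\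
  (Rmin b c - Rmin a c) + (Rmax b c - Rmax a c) = b - a.
Proof.
  intros H. unfold Rmin, Rmax.
  destruct (Rle_dec b c), (Rle_dec a c); lra.
Qed.

Lemma meas_half c : leb_measurable (fun x => c <= x).
Proof.
  intros E HE.
  assert (bs : forall P : R -> Prop, bounded_set (fun x => E x /\ P x))
    by (intro P; apply (bounded_sub _ E HE); tauto).
  apply Rle_antisym.
  - apply outer_subadd; auto. intros x Hx. destruct (Rle_dec c x); tauto.
  - apply outer_ge; auto. intros s (a & b & Hab & Hc & Hs).
    destruct (Rseries_CV_comp (fun n => Rmin (b n) c - Rmin (a n) c) (fun n => b n - a n))
      as [s1 H1]. intro n. apply (minmax_facts _ _ c (Hab n)). exists s. exact Hs.
    destruct (Rseries_CV_comp (fun n => Rmax (b n) c - Rmax (a n) c) (fun n => b n - a n))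
      as [s2 H2]. intro n. apply (minmax_facts _ _ c (Hab n)). exists s. exact Hs.
    assert (Hsum : s1 + s2 = s).
    { eapply UL_sequence; [apply CV_plus; [exact H1|exact H2]|].
      eapply Un_cv_ext; [|exact Hs]. intro n. simpl.
      rewrite <- plus_sum. apply sum_eq. intros i _. symmetry. apply (minmax_facts _ _ c (Hab i)). }
    assert (leb_outer (fun x => E x /\ c <= x) <= s2).
    { apply outer_le_cover; auto.
      exists (fun n => Rmax (a n) c), (fun n => Rmax (b n) c). split; [|split].
      - intro n. specialize (Hab n). unfold Rmax. destruct (Rle_dec (a n) c), (Rle_dec (b n) c); lra.
      - intros x [Hx Hcx]. destruct (Hc x Hx) as [n Hn]. exists n. unfold Rmax.
        destruct (Rle_dec (a n) c), (Rle_dec (b n) c); lra.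
      - exact H2. }
    assert (leb_outer (fun x => E x /\ ~ c <= x) <= s1).
    { apply outer_le_cover; auto.
      exists (fun n => Rmin (a n) c), (fun n => Rmin (b n) c). split; [|split].
      - intro n. specialize (Hab n). unfold Rmin. destruct (Rle_dec (a n) c), (Rle_dec (b n) c); lra.
      - intros x [Hx Hcx]. destruct (Hc x Hx) as [n Hn]. exists n. unfold Rmin.
        destruct (Rle_dec (a n) c), (Rle_dec (b n) c); lra.
      - exact H1. }
    lra.
Qed.

Lemma meas_ext A B : (forall x, A x <-> B x) -> leb_measurable A -> leb_measurable B.
Proof.
  intros H HA E HE. rewrite (HA E HE).
  rewrite (outer_ext (fun x => E x /\ A x) (fun x => E x /\ B x)).
  rewrite (outer_ext (fun x => E x /\ ~ A x) (fun x => E x /\ ~ B x)). lra.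
  apply (bounded_sub _ E HE); tauto. firstorder.
  apply (bounded_sub _ E HE); tauto. firstorder.
Qed.

Lemma in_dyad_nonneg I x : in_dyad I x -> 0 <= x.
Proof.
  unfold in_dyad. intros [H _]. eapply Rle_trans; [|exact H].
  apply Rmult_le_pos. apply powerRZ_le; lra. apply pos_INR.
Qed.

Lemma E_meas N Q : measurable_fun N -> leb_measurable (E_set N Q).
Proof.
  intros HN.
  assert (Hl : 0 <= powerRZ 2 (dj (I_of Q)) * INR (dm (I_of Q))).
  { apply Rmult_le_pos. apply powerRZ_le; lra. apply pos_INR. }
  set (l := powerRZ 2 (dj (I_of Q)) * INR (dm (I_of Q))) in *.
  set (r := powerRZ 2 (dj (I_of Q)) * (INR (dm (I_of Q)) + 1)).
  set (c := powerRZ 2 (dj (w_of Q)) * INR (dm (w_of Q))).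
  set (d := powerRZ 2 (dj (w_of Q)) * (INR (dm (w_of Q)) + 1)).
  apply (meas_ext (fun x => (((0 <= x) /\ (N x < d)) /\ ~ ((0 <= x) /\ (N x < c))) /\
       ((l <= x) /\ ~ (r <= x)))).
  - intro x. unfold E_set, in_dyad. fold l r c d. split.
    + intros [[[H1 H2] H3] [H4 H5]]. split; split; try lra.
    + intros [[H1 H2] [H3 H4]]. split; [split; [split; lra|] | split; [lra|]]; intros HH; [destruct HH as [_ HH]|]; lra.
  - apply meas_inter; apply meas_inter.
    + apply HN.
    + apply meas_compl, HN.
    + apply meas_half.
    + apply meas_compl, meas_half.
Qed.

Definition sumE N (L : list bitile) : R :=
  fold_right (fun Q acc => leb_outer (E_set N Q) + acc) 0 L.
Definition UE N (L : list bitile) (x : R) : Prop := exists Q, In Q L /\ E_set N Q x.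

Lemma P01_bounded N Q : in_P01 Q -> bounded_set (E_set N Q).
Proof.
  intros H. exists 1. intros x [Hx _]. apply H in Hx. rewrite Rabs_right; lra.
Qed.

Lemma UE_sub01 N L : (forall Q, In Q L -> in_P01 Q) -> forall x, UE N L x -> 0 <= x <= 1.
Proof. intros H x (Q & HQ & Hx & _). exact (H Q HQ x Hx). Qed.

Lemma UE_bounded N L : (forall Q, In Q L -> in_P01 Q) -> bounded_set (UE N L).
Proof.
  intros H. exists 1. intros x Hx. apply (UE_sub01 N L H) in Hx. rewrite Rabs_right; lra.
Qed.

Lemma superadd N L : measurable_fun N -> NoDup L -> (forall Q, In Q L -> in_P01 Q) ->
  (forall Q Q' x, In Q L -> In Q' L -> Q <> Q' -> E_set N Q x -> E_set N Q' x -> False) ->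
  sumE N L <= leb_outer (UE N L).
Proof.
  intros HN. induction L as [|Q L IH]; intros HD H01 Hdis; simpl.
  - apply outer_nonneg. exists 0. intros x (Q & [] & _).
  - inversion HD; subst.
    assert (HB := UE_bounded N (Q :: L) H01).
    rewrite (E_meas N Q HN _ HB).
    rewrite (outer_ext (fun x => UE N (Q :: L) x /\ E_set N Q x) (E_set N Q)).
    rewrite (outer_ext (fun x => UE N (Q :: L) x /\ ~ E_set N Q x) (UE N L)).
    + assert (sumE N L <= leb_outer (UE N L)).
      { apply IH; auto. intros; apply H01; simpl; auto.
        intros. eapply (Hdis Q0 Q'); simpl; eauto. }
      apply Rplus_le_compat_l; exact H.
    + apply UE_bounded. intros; apply H01; simpl; auto.
    + intro x. split.
      * intros [(Q' & [<-|HQ'] & Hx) Hn]. contradiction. exists Q'; auto.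
      * intros (Q' & HQ' & Hx). split. exists Q'; simpl; auto.
        intro HQx. apply (Hdis Q Q' x); simpl; auto. intro; subst; auto.
    + apply P01_bounded, H01; simpl; auto.
    + intro x. split. tauto. intro Hx. split; auto. exists Q; simpl; auto.
Qed.

Lemma pow2_pos j : 0 < powerRZ 2 j.
Proof. apply powerRZ_lt; lra. Qed.

Lemma pow2_shift j n : powerRZ 2 (j + Z.of_nat n) = powerRZ 2 j * 2 ^ n.
Proof. rewrite powerRZ_add by lra. rewrite pow_powerRZ. reflexivity. Qed.

Lemma pow2_lt i j : (j < i)%Z -> powerRZ 2 j < powerRZ 2 i.
Proof.
  intros H. replace i with (j + Z.of_nat (Z.to_nat (i - j)))%Z by lia.
  rewrite pow2_shift. destruct (Z.to_nat (i - j)) eqn:E. lia.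
  simpl. pose proof (pow2_pos j). pose proof (pow_R1_Rle 2 n ltac:(lra)). nra.
Qed.

Lemma dyad_left I : in_dyad I (powerRZ 2 (dj I) * INR (dm I)).
Proof. unfold in_dyad. pose proof (pow2_pos (dj I)). split; lra. Qed.

Definition lft (K : dyad) : R := powerRZ 2 (dj K) * INR (dm K).

Lemma in_dyad_iff K x : in_dyad K x <-> lft K <= x < lft K + dlen K.
Proof. unfold in_dyad, lft, dlen. replace (powerRZ 2 (dj K) * (INR (dm K) + 1)) with
  (powerRZ 2 (dj K) * INR (dm K) + powerRZ 2 (dj K)) by ring. tauto. Qed.

Lemma dsub_le I J : dsub I J -> (dj I <= dj J)%Z /\ (dj I = dj J -> dm I = dm J).
Proof.
  intros H. pose proof (pow2_pos (dj I)). pose proof (pow2_pos (dj J)).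
  assert (HaJ := H _ (dyad_left I)). fold (lft I) in HaJ. rewrite in_dyad_iff in HaJ.
  assert (Hend : lft I + dlen I <= lft J + dlen J).
  { destruct (Rle_dec (lft I + dlen I) (lft J + dlen J)) as [|Hn]; auto. exfalso.
    assert (HI : in_dyad I (lft J + dlen J)).
    { rewrite in_dyad_iff. lra. }
    apply H in HI. rewrite in_dyad_iff in HI. lra. }
  assert (HLL : dlen I <= dlen J) by lra.
  split.
  - destruct (Z.lt_ge_cases (dj J) (dj I)) as [Hlt|]; [|lia]. apply pow2_lt in Hlt. unfold dlen in *. lra.
  - intros Heq. unfold dlen, lft in *. rewrite Heq in *.
    assert (powerRZ 2 (dj J) * INR (dm I) = powerRZ 2 (dj J) * INR (dm J)) by lra.
    apply Rmult_eq_reg_l in H2. apply INR_eq; auto. lra.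
Qed.

Lemma dyad_nest I J x : in_dyad I x -> in_dyad J x -> (dj I <= dj J)%Z -> dsub I J.
Proof.
  intros HI HJ Hle.
  set (k := Z.to_nat (dj J - dj I)).
  assert (Ej : dj J = (dj I + Z.of_nat k)%Z) by (unfold k; lia).
  set (p := powerRZ 2 (dj I)). assert (Hp : 0 < p) by apply pow2_pos.
  set (K := (2 ^ k)%nat).
  assert (HlJ : lft J = p * INR (K * dm J)).
  { unfold lft. rewrite Ej, pow2_shift, mult_INR. unfold K. rewrite pow_INR. simpl (INR 2).
    fold p. replace (1+1) with 2 by ring. ring. }
  assert (HdJ : lft J + dlen J = p * INR (K * dm J + K)).
  { rewrite HlJ. unfold dlen. rewrite Ej, pow2_shift, plus_INR. unfold K. rewrite pow_INR.
    simpl (INR 2). fold p. replace (1+1) with 2 by ring. ring. }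
  assert (HlI : lft I = p * INR (dm I)) by reflexivity.
  assert (HdI : lft I + dlen I = p * INR (dm I + 1)) by (rewrite plus_INR; unfold lft, dlen; fold p; simpl; ring).
  rewrite in_dyad_iff in HI, HJ.
  assert (A1 : (K * dm J <= dm I)%nat).
  { assert (p * INR (K * dm J) < p * INR (dm I + 1)) by lra.
    apply Rmult_lt_reg_l in H; auto. apply INR_lt in H. lia. }
  assert (A2 : (dm I + 1 <= K * dm J + K)%nat).
  { assert (p * INR (dm I) < p * INR (K * dm J + K)) by lra.
    apply Rmult_lt_reg_l in H; auto. apply INR_lt in H. lia. }
  intros z Hz. rewrite in_dyad_iff in *. apply le_INR in A1, A2.
  split.
  - rewrite HlJ. apply Rle_trans with (p * INR (dm I)). apply Rmult_le_compat_l; lra. lra.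
  - rewrite HdJ. apply Rlt_le_trans with (p * INR (dm I + 1)). lra. apply Rmult_le_compat_l; lra.
Qed.

Lemma tile_le_refl P : tile_le P P.
Proof. split; intros x Hx; auto. Qed.

Lemma tile_le_trans P Q R : tile_le P Q -> tile_le Q R -> tile_le P R.
Proof. intros [H1 H2] [H3 H4]. split; intros x Hx; auto. Qed.

Lemma tile_le_tj P Q : tile_le P Q -> (tj P <= tj Q)%Z.
Proof. intros [H _]. apply dsub_le in H. simpl in H. tauto. Qed.

Lemma tile_le_eq P Q : tile_le P Q -> (tj Q <= tj P)%Z -> P = Q.
Proof.
  intros [H1 H2] Hj. apply dsub_le in H1. apply dsub_le in H2. unfold I_of, w_of in *. cbn [dj dm] in *.
  destruct H1 as [Ha Hb]. destruct H2 as [Hc Hd].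
  assert (E1 : tmI P = tmI Q) by (apply Hb; lia). assert (E2 : tmW P = tmW Q) by (symmetry; apply Hd; lia). assert (E3 : tj P = tj Q) by lia. destruct P, Q; cbn in E1, E2, E3 |- *. congruence.
Qed.

Lemma E_cmp N Q Q' x : E_set N Q x -> E_set N Q' x -> tile_le Q Q' \/ tile_le Q' Q.
Proof.
  intros [H1 H2] [H3 H4].
  destruct (Z.le_ge_cases (tj Q) (tj Q')).
  - left. split. eapply dyad_nest; eauto; unfold I_of, w_of; cbn [dj]; lia.
    eapply dyad_nest; eauto; unfold I_of, w_of; cbn [dj]; lia.
  - right. split. eapply dyad_nest; eauto; unfold I_of, w_of; cbn [dj]; lia.
    eapply dyad_nest; eauto; unfold I_of, w_of; cbn [dj]; lia.
Qed.

Lemma three_not_div_pow t : ~ (3 | 2 ^ Z.of_nat t)%Z.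
Proof.
  induction t.
  - simpl. intros [c Hc]. lia.
  - rewrite Nat2Z.inj_succ, Z.pow_succ_r by lia. intro H.
    destruct (prime_mult 3 prime_3 _ _ H) as [[c Hc]|]; [lia|auto].
Qed.

Definition xi_of (Q : bitile) : R := powerRZ 2 (dj (w_of Q)) * (INR (dm (w_of Q)) + / 3).

Lemma xi_in Q : in_dyad (w_of Q) (xi_of Q).
Proof.
  unfold in_dyad, xi_of. pose proof (pow2_pos (dj (w_of Q))).
  split; apply Rmult_le_compat_l || apply Rmult_lt_compat_l; lra.
Qed.

Lemma xi_nonneg Q : 0 <= xi_of Q.
Proof. eapply in_dyad_nonneg. apply xi_in. Qed.

Lemma xi_nondyadic Q : ~ dyadic_rational (xi_of Q).
Proof.
  unfold xi_of. set (k := dj (w_of Q)). set (m := dm (w_of Q)).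
  intros (n & e & He).
  replace e with (k + (e - k))%Z in He by lia. rewrite powerRZ_add in He by lra.
  pose proof (pow2_pos k).
  assert (H1 : INR m + / 3 = IZR n * powerRZ 2 (e - k)).
  { apply Rmult_eq_reg_l with (powerRZ 2 k). rewrite He. ring. lra. }
  rewrite INR_IZR_INZ in H1.
  destruct (Z.le_ge_cases 0 (e - k)) as [Hd|Hd].
  - replace (e - k)%Z with (Z.of_nat (Z.to_nat (e - k))) in H1 by lia.
    rewrite <- pow_powerRZ in H1. replace 2 with (IZR 2) in H1 by reflexivity.
    rewrite pow_IZR in H1.
    assert (H2 : IZR (3 * Z.of_nat m + 1) = IZR (3 * (n * 2 ^ Z.of_nat (Z.to_nat (e - k))))).
    { rewrite plus_IZR, !mult_IZR. rewrite <- H1. simpl. field. }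
    apply eq_IZR in H2. lia.
  - replace (e - k)%Z with (- Z.of_nat (Z.to_nat (k - e)))%Z in H1 by lia.
    rewrite powerRZ_neg' in H1. rewrite <- pow_powerRZ in H1. replace 2 with (IZR 2) in H1 by reflexivity.
    rewrite pow_IZR in H1. set (t := Z.to_nat (k - e)) in *.
    assert (Hp : IZR (2 ^ Z.of_nat t) <> 0).
    { rewrite <- pow_IZR. apply pow_nonzero. discrR. }
    assert (H2 : IZR ((3 * Z.of_nat m + 1) * 2 ^ Z.of_nat t) = IZR (3 * n)).
    { rewrite !mult_IZR, plus_IZR, mult_IZR.
      replace (IZR 3 * IZR (Z.of_nat m) + IZR 1) with (3 * (IZR (Z.of_nat m) + / 3)) by (simpl; field).
      rewrite H1. field. auto. }
    apply eq_IZR in H2.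
    assert (Hdiv : (3 | (3 * Z.of_nat m + 1) * 2 ^ Z.of_nat t)%Z) by (exists n; lia).
    destruct (prime_mult 3 prime_3 _ _ Hdiv) as [[c Hc]|Hc]; [lia|].
    apply (three_not_div_pow t); auto.
Qed.

Definition dec (P : Prop) : bool := if excluded_middle_informative P then true else false.
Lemma dec_true P : dec P = true <-> P.
Proof. unfold dec. destruct (excluded_middle_informative P); split; auto; discriminate. Qed.
Lemma dec_false P : dec P = false <-> ~ P.
Proof. unfold dec. destruct (excluded_middle_informative P); split; auto; try discriminate; tauto. Qed.

Definition bitile_eq_dec : forall x y : bitile, {x = y} + {x <> y}.
Proof. decide equality; [apply Nat.eq_dec | apply Nat.eq_dec | apply Z.eq_dec]. Defined.

Lemma find_sub (A : Type) (g h : A -> bool) (l : list A) (Q : A) :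
  (forall x, In x l -> h x = true -> g x = true) -> find g l = Some Q -> h Q = true ->
  find h l = Some Q.
Proof.
  induction l as [|a l IH]; simpl; intros Hs Hg Hh. discriminate.
  destruct (g a) eqn:Ega.
  - injection Hg as <-. rewrite Hh. reflexivity.
  - destruct (h a) eqn:Eha. rewrite (Hs a (or_introl eq_refl) Eha) in Ega. discriminate.
    apply IH; auto.
Qed.

Lemma list_max_tj (l : list bitile) : l <> nil -> exists x, In x l /\ forall y, In y l -> (tj y <= tj x)%Z.
Proof.
  induction l as [|a l IH]; intros H. congruence.
  destruct l as [|b l'].
  - exists a. split. simpl; auto. intros y [<-|[]]. lia.
  - destruct IH as (x & Hx & Hm). discriminate.
    destruct (Z.le_ge_cases (tj a) (tj x)).
    + exists x. split. simpl; auto. intros y [<-|Hy]; auto.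
    + exists a. split. simpl; auto. intros y [<-|Hy]. lia. specialize (Hm y Hy). lia.
Qed.

Lemma mass_le N L c : 0 <= c -> (forall P, In P L -> tile_density N P <= c) -> mass N L <= c.
Proof.
  induction L as [|a L IH]; simpl; intros Hc H. auto.
  apply Rmax_lub. apply H; auto. apply IH; auto.
Qed.

Section Main.
Variable N : R -> R.
Variable Ps : list bitile.

Definition mu := mass N Ps.
Definition big (P : bitile) : Prop := mu / 2 < tile_density N P.
Definition hi (P : bitile) : Prop := exists Q, In Q Ps /\ big Q /\ tile_le P Q.
Definition Phi := filter (fun P => dec (hi P)) Ps.
Definition Plo := filter (fun P => negb (dec (hi P))) Ps.
Definition maximal (Q : bitile) : Prop :=
  In Q Ps /\ big Q /\ forall Q', In Q' Ps -> big Q' -> tile_le Q Q' -> Q' = Q.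
Definition Qs := filter (fun Q => dec (maximal Q)) (nodup bitile_eq_dec Ps).
Definition fnd (P : bitile) := find (fun Q' => dec (tile_le P Q')) Qs.
Definition treeOf (Q : bitile) := filter (fun P => dec (fnd P = Some Q)) Ps.
Definition tdata (Q : bitile) : tree_data := (treeOf Q, (I_of Q, xi_of Q)).
Definition F := map tdata Qs.

Lemma in_Qs Q : In Q Qs <-> maximal Q.
Proof.
  unfold Qs. rewrite filter_In, nodup_In, dec_true. unfold maximal. tauto.
Qed.

Lemma NoDup_Qs : NoDup Qs.
Proof. apply NoDup_filter, NoDup_nodup. Qed.

Lemma in_Phi P : In P Phi <-> In P Ps /\ hi P.
Proof. unfold Phi. rewrite filter_In, dec_true. tauto. Qed.

Lemma in_Plo P : In P Plo <-> In P Ps /\ ~ hi P.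
Proof. unfold Plo. rewrite filter_In. destruct (dec (hi P)) eqn:E.
  apply (proj1 (dec_true _)) in E. simpl. split. intros [H1 H2]; discriminate. intros [H1 H2]; tauto.
  apply (proj1 (dec_false _)) in E. simpl. tauto. Qed.

Lemma in_tree Q P : In P (treeOf Q) <-> In P Ps /\ fnd P = Some Q.
Proof. unfold treeOf. rewrite filter_In, dec_true. tauto. Qed.

Lemma fnd_spec P Q : fnd P = Some Q -> maximal Q /\ tile_le P Q.
Proof.
  unfold fnd. intros H. apply find_some in H. destruct H as [H1 H2].
  rewrite in_Qs in H1. rewrite dec_true in H2. auto.
Qed.

Lemma exists_maximal P Q : In Q Ps -> big Q -> tile_le P Q ->
  exists Q', maximal Q' /\ tile_le P Q'.
Proof.
  intros HQ HB HPQ.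
  set (C := filter (fun R => dec (big R /\ tile_le P R)) Ps).
  assert (HC : forall R, In R C <-> In R Ps /\ big R /\ tile_le P R).
  { intro R. unfold C. rewrite filter_In, dec_true. tauto. }
  destruct (list_max_tj C) as (X & HX & Hm).
  { intro E. assert (In Q C) by (apply HC; auto). rewrite E in H. destruct H. }
  apply HC in HX. destruct HX as (HX1 & HX2 & HX3).
  exists X. split; auto. split; auto. split; auto.
  intros Q' HQ' HB' HXQ'. symmetry. apply tile_le_eq; auto.
  apply Hm. apply HC. split; auto. split; auto. eapply tile_le_trans; eauto.
Qed.


Lemma conv_Phi : convex Ps -> convex Phi.
Proof.
  intros HC P P' P'' H1 H2 L1 L2. rewrite in_Phi in *.
  destruct H1 as [H1 _]. destruct H2 as [H2 (Q & HQ & HB & HL)].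
  split. apply (HC P P' P''); auto. unfold hi. exists Q. split; [auto|split; [auto|]]. eapply tile_le_trans; eauto.
Qed.

Lemma conv_Plo : convex Ps -> convex Plo.
Proof.
  intros HC P P' P'' H1 H2 L1 L2. rewrite in_Plo in *.
  destruct H1 as [H1 Hn]. destruct H2 as [H2 _].
  split. apply (HC P P' P''); auto. intros (Q & HQ & HB & HL). apply Hn.
  unfold hi. exists Q. split; [auto|split; [auto|]]. eapply tile_le_trans; eauto.
Qed.

Lemma conv_tree Q : convex Ps -> convex (treeOf Q).
Proof.
  intros HC P P' P'' H1 H2 L1 L2. rewrite in_tree in *.
  destruct H1 as [H1 F1]. destruct H2 as [H2 F2].
  split. apply (HC P P' P''); auto.
  unfold fnd in *. eapply find_sub; [|exact F1|].
  - intros x _ Hx. apply (proj1 (dec_true _)) in Hx. apply (proj2 (dec_true _)). eapply tile_le_trans; eauto.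
  - apply (proj2 (dec_true _)). apply fnd_spec in F2. eapply tile_le_trans; eauto. tauto.
Qed.

Lemma tree_ok Q : In Q Qs -> is_tree (treeOf Q) (I_of Q) (xi_of Q).
Proof.
  intros HQ. split; [apply xi_nonneg|split; [apply xi_nondyadic|]].
  intros P HP. apply in_tree in HP. destruct HP as [_ HP]. apply fnd_spec in HP.
  destruct HP as [_ [H1 H2]]. split; auto. apply H2. apply xi_in.
Qed.

Lemma Phi_cover P : In P Phi <-> exists T, In T F /\ In P (fst T).
Proof.
  rewrite in_Phi. split.
  - intros [HP (Q & HQ & HB & HL)].
    destruct (exists_maximal P Q HQ HB HL) as (X & HX & HPX).
    destruct (fnd P) as [Q0|] eqn:E.
    + exists (tdata Q0). split. unfold F. apply in_map. apply in_Qs. apply fnd_spec in E. tauto.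
      simpl. apply in_tree. auto.
    + unfold fnd in E. assert (In X Qs) by (apply in_Qs; auto).
      apply (find_none _ _ E) in H. apply (proj1 (dec_false _)) in H. contradiction.
  - intros (T & HT & HP). unfold F in HT. apply in_map_iff in HT. destruct HT as (Q & <- & HQ).
    simpl in HP. apply in_tree in HP. destruct HP as [HP E]. split; auto.
    apply fnd_spec in E. destruct E as [(H1 & H2 & _) H3]. exists Q. auto.
Qed.

Lemma F_disj : forall i j d P, (i < length F)%nat -> (j < length F)%nat -> i <> j ->
      In P (fst (nth i F d)) -> ~ In P (fst (nth j F d)).
Proof.
  intros i j d P Hi Hj Hij HPi HPj. unfold F in *. rewrite length_map in Hi, Hj.
  rewrite (nth_indep _ d (tdata (Bitile 0 0 0))) in HPi by (rewrite length_map; auto).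
  rewrite (nth_indep _ d (tdata (Bitile 0 0 0))) in HPj by (rewrite length_map; auto).
  rewrite map_nth in HPi. rewrite map_nth in HPj. simpl in HPi, HPj.
  apply in_tree in HPi, HPj. destruct HPi as [_ E1]. destruct HPj as [_ E2].
  rewrite E1 in E2. injection E2 as E2.
  apply Hij. eapply NoDup_nth; eauto. apply NoDup_Qs.
Qed.

Lemma sum_F : sum_top_lengths F = fold_right (fun Q acc => dlen (I_of Q) + acc) 0 Qs.
Proof. unfold F. induction Qs; simpl; auto. rewrite <- IHl. reflexivity. Qed.

End Main.

Lemma UE_le2 N L : (forall Q, In Q L -> in_P01 Q) -> leb_outer (UE N L) <= 2.
Proof.
  intros H. replace 2 with (2 - 0) by ring. apply outer_le_cover. apply UE_bounded; auto.
  apply one_cover. lra. intros x Hx. apply (UE_sub01 N L H) in Hx. lra.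
Qed.

Lemma sum_bound N Ps : measurable_fun N -> (forall P, In P Ps -> in_P01 P) ->
  0 < mu N Ps -> sum_top_lengths (F N Ps) <= 4 / mu N Ps.
Proof.
  intros HN H01 Hmu. rewrite sum_F.
  assert (Hin : forall Q, In Q (Qs N Ps) -> In Q Ps /\ big N Ps Q /\ in_P01 Q).
  { intros Q HQ. apply in_Qs in HQ. destruct HQ as (H1 & H2 & _). auto. }
  assert (Hsup : sumE N (Qs N Ps) <= leb_outer (UE N (Qs N Ps))).
  { apply superadd; auto. apply NoDup_Qs. intros Q HQ; apply Hin; auto.
    intros Q Q' x HQ HQ' Hne E1 E2. apply in_Qs in HQ, HQ'.
    destruct (E_cmp N Q Q' x E1 E2) as [L|L].
    - apply Hne. symmetry. apply (proj2 (proj2 HQ)); auto. apply HQ'. apply HQ'.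
    - apply Hne. apply (proj2 (proj2 HQ')); auto. apply HQ. apply HQ. }
  assert (H2 : leb_outer (UE N (Qs N Ps)) <= 2) by (apply UE_le2; intros; apply Hin; auto).
  assert (Hl : forall l, (forall Q, In Q l -> big N Ps Q /\ in_P01 Q) ->
     fold_right (fun Q acc => dlen (I_of Q) + acc) 0 l <= 2 / mu N Ps * sumE N l).
  { induction l as [|a l IH]; simpl; intros Hl. lra.
    assert (Ha : dlen (I_of a) <= 2 / mu N Ps * leb_outer (E_set N a)).
    { destruct (Hl a (or_introl eq_refl)) as [Hb _]. unfold big, tile_density in Hb.
      assert (Hd : 0 < dlen (I_of a)) by apply pow2_pos.
      apply Rmult_lt_compat_r with (r := dlen (I_of a)) in Hb; auto.
      unfold Rdiv in *. rewrite (Rmult_assoc (leb_outer _)), Rinv_l, Rmult_1_r in Hb by lra.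
      apply Rlt_le. apply Rmult_lt_reg_l with (mu N Ps / 2). lra.
      replace (mu N Ps / 2 * (2 * / mu N Ps * leb_outer (E_set N a))) with (leb_outer (E_set N a)) by (field; lra).
      lra. }
    assert (IH' := IH (fun Q HQ => Hl Q (or_intror HQ))). unfold sumE in *. fold (sumE N l) in *.
    rewrite Rmult_plus_distr_l. lra. }
  eapply Rle_trans. apply Hl. intros Q HQ; split; apply Hin; auto.
  assert (0 < 2 / mu N Ps) by (apply Rdiv_lt_0_compat; lra).
  replace (4 / mu N Ps) with (2 / mu N Ps * 2) by (field; lra).
  apply Rmult_le_compat_l; lra.
Qed.

Theorem lemma5p1 :
  exists C : R, 0 < C /\
  forall (N : R -> R) (Ps : list bitile),
    nonneg_fun N -> measurable_fun N ->
    (forall P, In P Ps -> in_P01 P) ->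
    convex Ps ->
    0 < mass N Ps ->
    exists (Phi Plo : list bitile) (F : list tree_data),
      (forall P, In P Ps <-> In P Phi \/ In P Plo) /\
      (forall P, In P Phi -> ~ In P Plo) /\
      convex Phi /\ convex Plo /\
      mass N Plo <= / 2 * mass N Ps /\
      is_convex_forest Phi F /\
      sum_top_lengths F <= C / mass N Ps.
Proof.
  exists 4. split. lra.
  intros N Ps Hnn HN H01 HC Hmu.
  exists (Phi N Ps), (Plo N Ps), (F N Ps).
  split; [|split; [|split; [|split; [|split; [|split]]]]].
  - intro P. rewrite in_Phi, in_Plo. split. intro H. destruct (classic (hi N Ps P)); tauto. tauto.
  - intros P H1 H2. rewrite in_Phi in H1. rewrite in_Plo in H2. tauto.
  - apply conv_Phi; auto.
  - apply conv_Plo; auto.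
  - apply mass_le. unfold mu in Hmu. lra.
    intros P HP. rewrite in_Plo in HP. destruct HP as [HP Hn].
    destruct (Rle_dec (tile_density N P) (/ 2 * mass N Ps)) as [|Hg]; auto. exfalso. apply Hn.
    exists P. split; auto. split. unfold big, mu. lra. apply tile_le_refl.
  - split; [split; [|split]|].
    + intros T HT. unfold F in HT. apply in_map_iff in HT. destruct HT as (Q & <- & HQ).
      simpl. split. apply tree_ok; auto. apply conv_tree; auto.
    + apply Phi_cover.
    + apply F_disj.
    + apply conv_Phi; auto.
  - apply sum_bound; auto.
Qed.
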